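(* Let $c\in[\frac12,1)$ and let $d,\delta$ be positive integers with $d\ge\delta$. Let $G$ be a graph with maximum degree $\delta$ and $w:V(G)\to[0,1]$ a weight function with $w(V(G))=1$, and assume $G$ has no $d$-bounded $(w,c)$-balanced separator. Let $u,v\in V(G)$ with $u\in A_v$. Then either $u$ and $v$ are star twins, or $B_v\cup C_v\subseteq B_u\cup C_u$.
   Context: For $X\subseteq V(G)$, $w(X)=\sum_{x\in X}w(x)$; $N[v]=N(v)\cup\{v\}$; $N^d[v]$ is the set of vertices at distance at most $d$ from $v$. A set $X$ is $d$-bounded if $X\subseteq N^d[v]$ for some $v$. $X$ is a $(w,c)$-balanced separator if every connected component $D$ of $G\setminus X$ has $w(D)\le c$. For $v\in V(G)$, the canonical star separation $S_v=(A_v,C_v,B_v)$ is: $B_v$ the (under these assumptions unique) largest-weight connected component of $G\setminus N[v]$, $C_v$ the set consisting of $v$ and every vertex of $N(v)$ with a neighbor in $B_v$, and $A_v=V(G)\setminus(B_v\cup C_v)$. Two vertices $u,v$ are star twins if $B_u=B_v$, $C_u\setminus\{u\}=C_v\setminus\{v\}$ and $A_u\setminus\{v\}=A_v\setminus\{u\}$. *)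

(* Defs.v *)
From HB Require Import structures.
From mathcomp Require Import all_boot all_order all_algebra.
Set Implicit Arguments. Unset Strict Implicit. Unset Printing Implicit Defensive.
Import Order.TTheory GRing.Theory Num.Theory.
Local Open Scope ring_scope.

(* A finite simple graph: vertex type T : finType, adjacency e : rel T
   (symmetry and irreflexivity are hypotheses of the theorem). *)
Section Graph.
Variables (T : finType) (e : rel T).

Definition nbh (v : T) : {set T} := [set x | e v x].
Definition cnbh (v : T) : {set T} := v |: nbh v.

Fixpoint ball (k : nat) (v : T) : {set T} :=
  if k is k'.+1 then ball k' v :|: [set y | [exists x in ball k' v, e x y]]
  else [set v].

Definition bounded (d : nat) (X : {set T}) : Prop :=
  exists v : T, X \subset ball d v.

Definition rel_minus (X : {set T}) : rel T :=
  fun a b => [&& e a b, a \notin X & b \notin X].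

Definition is_comp (X D : {set T}) : bool :=
  [exists x, (x \notin X) && (D == [set y | connect (rel_minus X) x y])].

Section Weight.
Variables (R : numDomainType) (w : T -> R).

Definition wt (X : {set T}) : R := \sum_(x in X) w x.

Definition balanced_sep (c : R) (X : {set T}) : Prop :=
  forall D : {set T}, is_comp X D -> wt D <= c.

(* B_v: a largest-weight component of G \ N[v] (unique under the
   theorem's assumptions); set0 if G \ N[v] is empty *)
Definition Bs (v : T) : {set T} :=
  odflt set0 [pick D : {set T} | is_comp (cnbh v) D &&
     [forall D' : {set T}, is_comp (cnbh v) D' ==> (wt D' <= wt D)]].

Definition Cs (v : T) : {set T} :=
  v |: [set x in nbh v | [exists y in Bs v, e x y]].

Definition As (v : T) : {set T} := ~: (Bs v :|: Cs v).

Definition star_twins (u v : T) : Prop :=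
  [/\ Bs u = Bs v, Cs u :\ u = Cs v :\ v & As u :\ v = As v :\ u].

End Weight.
End Graph.

(* Main.v *)
Require Import Defs.
From HB Require Import structures.
From mathcomp Require Import all_boot all_order all_algebra.
From mathcomp Require Import lra.
Import Order.TTheory GRing.Theory Num.Theory.
Local Open Scope ring_scope.

Lemma connect_transfer {T : finType} {r r' : rel T} {A : {set T}} {x y : T} :
  x \in A -> (forall a b, a \in A -> r a b -> b \in A /\ r' a b) ->
  connect r x y -> connect r' x y /\ y \in A.
Proof.
move=> Hx H /connectP[p Hp ->]; elim: p x Hx Hp => [|z p IH] x Hx /=.
  by rewrite connect0.
case/andP=> Hxz Hp; have [Hz Hr] := H _ _ Hx Hxz.
have [H1 H2] := IH _ Hz Hp; split=> //; exact: connect_trans (connect1 Hr) H1.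
Qed.

Lemma rel_minus_sym {T : finType} {e : rel T} X :
  symmetric e -> symmetric (rel_minus e X).
Proof. by move=> es a b; rewrite /rel_minus es; congr (_ && _); exact: andbC. Qed.

Definition comp {T : finType} (e : rel T) (X : {set T}) (x : T) : {set T} := [set y | connect (rel_minus e X) x y].

Lemma comp_eq {T : finType} {e : rel T} (es : symmetric e) {X : {set T}} {x y : T} :
  y \in comp e X x -> comp e X y = comp e X x.
Proof.
rewrite inE => Hxy; apply/setP => z; rewrite !inE; apply/idP/idP => H.
  exact: connect_trans Hxy H.
rewrite (sym_connect_sym (@rel_minus_sym _ e X es)) in Hxy; exact: connect_trans Hxy H.
Qed.

Lemma is_compP {T : finType} {e : rel T} {X D : {set T}} :
  is_comp e X D -> exists2 x, x \notin X & D = comp e X x.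
Proof. by case/existsP => x /andP[Hx /eqP ->]; exists x. Qed.

Lemma comp_notin {T : finType} {e : rel T} {X : {set T}} {x y : T} :
  x \notin X -> y \in comp e X x -> y \notin X.
Proof.
move=> Hx; rewrite inE => Hc.
have Hx' : x \in ~: X by rewrite inE.
have Hs : forall a b, a \in ~: X -> rel_minus e X a b -> b \in ~: X /\ rel_minus e X a b.
  by move=> a b _ Hab; split=> //; case/and3P: Hab => _ _; rewrite inE.
have [_ ] := connect_transfer Hx' Hs Hc.
by rewrite inE.
Qed.

Lemma comp_inP {T : finType} {e : rel T} (es : symmetric e) {X D : {set T}} {y : T} :
  is_comp e X D -> y \in D -> y \notin X /\ D = comp e X y.
Proof.
case/is_compP => x Hx -> Hy; split; first exact: comp_notin Hy.
by rewrite (comp_eq es Hy).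
Qed.

Lemma comp_adj {T : finType} {e : rel T} (es : symmetric e) {X D : {set T}} {y z : T} :
  is_comp e X D -> y \in D -> e y z -> z \notin X -> z \in D.
Proof.
move=> HD Hy Hyz Hz; have [Hyn ->] := comp_inP es HD Hy.
by rewrite inE connect1 // /rel_minus Hyz Hyn Hz.
Qed.

Lemma comp_disj {T : finType} {e : rel T} (es : symmetric e) {X D1 D2 : {set T}} {z : T} :
  is_comp e X D1 -> is_comp e X D2 -> z \in D1 -> z \in D2 -> D1 = D2.
Proof.
move=> H1 H2 z1 z2; have [_ ->] := comp_inP es H1 z1.
by have [_ ->] := comp_inP es H2 z2.
Qed.

Lemma wt_sub {R : numDomainType} {T : finType} {w : T -> R}
  (hw : forall x, 0 <= w x) {A B : {set T}} : A \subset B -> wt w A <= wt w B.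
Proof.
move=> sAB; rewrite /wt [X in _ <= X](big_setID A) /= (setIidPr sAB) lerDl.
by apply: sumr_ge0 => i _; exact: hw.
Qed.

Lemma wt_union {R : numDomainType} {T : finType} (w : T -> R) (A B : {set T}) :
  [disjoint A & B] -> wt w (A :|: B) = wt w A + wt w B.
Proof.
move=> dAB; rewrite /wt (big_setID A) /=.
have -> : (A :|: B) :&: A = A by apply/setIidPr; exact: subsetUl.
suff -> : (A :|: B) :\: A = B by [].
by rewrite setDUl setDv set0U; apply/setDidPl; rewrite disjoint_sym.
Qed.

Lemma heavy_uniq {R : realFieldType} {T : finType} {e : rel T} (es : symmetric e)
  (w : T -> R) (hw : forall x, 0 <= w x) (hw1 : wt w setT = 1) (X D1 D2 : {set T}) :
  is_comp e X D1 -> is_comp e X D2 -> 1/2 < wt w D1 -> 1/2 < wt w D2 -> D1 = D2.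
Proof.
move=> H1 H2 h1 h2.
case: (boolP [disjoint D1 & D2]) => [Hd | /pred0Pn [z /andP[z1 z2]]];
  last exact: (comp_disj es H1 H2 z1 z2).
have := wt_sub hw (subsetT (D1 :|: D2)); rewrite wt_union // hw1 => H.
exfalso; lra.
Qed.

Lemma ball_cnbh {T : finType} {e : rel T} d v : (0 < d)%N -> cnbh e v \subset ball e d v.
Proof.
case: d => // d _; elim: d => [|d IH].
  apply/subsetP => x; rewrite /cnbh /nbh /= !inE => /orP[->//|Hx].
  by apply/orP; right; apply/existsP; exists v; rewrite !inE eqxx.
by apply: (subset_trans IH); rewrite [ball _ d.+2 _]/=; exact: subsetUl.
Qed.

Lemma heavy {R : realFieldType} {T : finType} {e : rel T} (es : symmetric e)
  (c : R) (d : nat) (hc1 : 1 / 2 <= c) (hd : (0 < d)%N)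
  (w : T -> R) (hw : forall x, 0 <= w x)
  (hnosep : ~ exists X : {set T}, bounded e d X /\ balanced_sep e w c X) v :
  is_comp e (cnbh e v) (Bs e w v) /\ 1/2 < wt w (Bs e w v).
Proof.
have [D /andP[HD HDc]] : exists D, is_comp e (cnbh e v) D && (c < wt w D).
  case: (boolP [exists D, is_comp e (cnbh e v) D && (c < wt w D)]) => [/existsP//|/existsPn H].
  exfalso; apply: hnosep; exists (cnbh e v); split; first by exists v; exact: ball_cnbh.
  by move=> D HD; have := H D; rewrite HD /= -leNgt.
pose P := fun D => is_comp e (cnbh e v) D.
case: (@arg_maxP _ R _ D P (wt w) HD) => D0 HD0 Hmax.
rewrite /Bs; case: pickP => [D1 /andP[H1 /forallP H2] | Hnone].
  split=> //; have := implyP (H2 D) HD; lra.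
have HD0' : is_comp e (cnbh e v) D0 := HD0.
exfalso; have := Hnone D0; rewrite HD0' /=; move/negP; apply.
by apply/forallP => D'; apply/implyP => HD'; exact: Hmax.
Qed.

Theorem lemma4p2 (R : realFieldType) (T : finType) (e : rel T)
  (e_sym : symmetric e) (e_irr : irreflexive e)
  (c : R) (d delta : nat)
  (hc1 : 1 / 2 <= c) (hc2 : c < 1)
  (hd : (0 < d)%N) (hdelta : (0 < delta)%N) (hdd : (delta <= d)%N)
  (hdeg : forall x : T, (#|nbh e x| <= delta)%N)
  (hdeg_attained : exists x : T, #|nbh e x| = delta)
  (w : T -> R) (hw : forall x, 0 <= w x <= 1) (hw1 : wt w setT = 1)
  (hnosep : ~ exists X : {set T}, bounded e d X /\ balanced_sep e w c X)
  (u v : T) (huv : u \in As e w v) :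
  star_twins e w u v \/ (Bs e w v :|: Cs e w v \subset Bs e w u :|: Cs e w u).
Proof.
have es := e_sym.
have hw0 : forall x, 0 <= w x by move=> x; case/andP: (hw x).
have Hheavy := @heavy R T e es c d hc1 hd w hw0 hnosep.
have [cBv hBv] := Hheavy v; have [cBu hBu] := Hheavy u.
have HC : forall y x, (x \in Cs e w y) =
    (x == y) || (e y x && [exists z in Bs e w y, e x z]).
  by move=> y x; rewrite /Cs !inE.
have HA : forall y x, (x \in As e w y) = (x \notin Bs e w y) && (x \notin Cs e w y).
  by move=> y x; rewrite /As inE in_setU negb_or.
have CN : forall y x, (x \in cnbh e y) = (x == y) || e y x.
  by move=> y x; rewrite /cnbh !inE.
have CV : forall y x, x \in Cs e w y -> x != y ->
    e y x /\ exists2 z, z \in Bs e w y & e x z.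
  move=> y x; rewrite HC => /orP[/eqP-> | /andP[H /existsP[z /andP[H1 H2]]]].
    by rewrite eqxx.
  by split=> //; exists z.
move: huv; rewrite HA => /andP[uBv uCv].
have uv : u != v by apply: contraNneq uCv => ->; rewrite HC eqxx.
have uCv' : ~~ (e v u && [exists z in Bs e w v, e u z]).
  by move: uCv; rewrite HC negb_or => /andP[_ ].
have Bvn : forall y, y \in Bs e w v -> y \notin cnbh e v :=
  fun y Hy => (comp_inP es cBv Hy).1.
have NB : forall y, y \in Bs e w v -> y \notin cnbh e u.
  move=> y Hy; rewrite CN negb_or; apply/andP; split.
    by apply: contraNneq uBv => <-.
  apply/negP => Huy; case: (boolP (e v u)) => Hvu.
    move: uCv'; rewrite Hvu /=; move/negP; apply.
    by apply/existsP; exists y; rewrite Hy Huy.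
  move/negP: uBv; apply; apply: (comp_adj es cBv Hy).
    by rewrite e_sym.
  by rewrite CN negb_or uv Hvu.
case: (set_0Vmem (Bs e w v)) => [H0 | [b Hb]].
  exfalso; move: hBv; rewrite H0 /wt big_set0; lra.
have Hsub : Bs e w v \subset comp e (cnbh e u) b.
  apply/subsetP => y Hy; have [_ Heq] := comp_inP es cBv Hb.
  rewrite Heq inE in Hy.
  have Hs : forall a z, a \in Bs e w v -> rel_minus e (cnbh e v) a z ->
      z \in Bs e w v /\ rel_minus e (cnbh e u) a z.
    move=> a z Ha /and3P[Haz _ Hz].
    have Hz' : z \in Bs e w v := comp_adj es cBv Ha Haz Hz.
    by split=> //; rewrite /rel_minus Haz !NB.
  have [H _] := connect_transfer Hb Hs Hy.
  by rewrite inE.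
have cD : is_comp e (cnbh e u) (comp e (cnbh e u) b).
  by apply/existsP; exists b; rewrite NB // eqxx.
have HBu : Bs e w u = comp e (cnbh e u) b.
  apply: (@heavy_uniq R T e es w hw0 hw1 _ _ _ cBu cD hBu).
  exact: lt_le_trans hBv (wt_sub hw0 Hsub).
have BvBu : Bs e w v \subset Bs e w u by rewrite HBu.
have C2 : forall x, x \in Cs e w v -> x != v -> ~~ e u x -> x \in Bs e w u.
  move=> x Hx xv Hux.
  have xu : x != u by apply: contraNneq uCv => <-.
  have [Hvx [y Hy Hxy]] := CV v x Hx xv.
  apply: (comp_adj es cBu (subsetP BvBu y Hy)).
    by rewrite e_sym.
  by rewrite CN negb_or xu Hux.
have C3 : forall x, x \in Cs e w v -> x != v -> e u x -> x \in Cs e w u.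
  move=> x Hx xv Hux.
  have [Hvx [y Hy Hxy]] := CV v x Hx xv.
  rewrite HC; apply/orP; right; rewrite Hux; apply/existsP; exists y.
  by rewrite (subsetP BvBu y Hy).
have := orbN (v \in Bs e w u :|: Cs e w u); case/orP => Hv.
  right; apply/subsetP => x /setUP[xB|xC]; apply/setUP.
    left; exact: (subsetP BvBu x xB).
  case: (eqVneq x v) => [Exv|xv].
    subst x; exact/setUP.
  case: (boolP (e u x)) => Hux.
    right; exact: (C3 x xC xv Hux).
  left; exact: (C2 x xC xv Hux).
left.
have vBu : v \notin Bs e w u by apply/negP => H; move/negP: Hv; apply; apply/setUP; left.
have vCu : v \notin Cs e w u by apply/negP => H; move/negP: Hv; apply; apply/setUP; right.
have D : forall x, x \in Cs e w v -> x != v -> e u x.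
  move=> x Hx xv; apply/negPn/negP => Hux.
  have xB := C2 x Hx xv Hux.
  have [Hvx _] := CV v x Hx xv.
  case: (boolP (e u v)) => Huv.
    move/negP: vCu; apply; rewrite HC Huv /=; apply/orP; right.
    by apply/existsP; exists x; rewrite xB.
  move/negP: vBu; apply; apply: (comp_adj es cBu xB).
    by rewrite e_sym.
  by rewrite CN negb_or eq_sym uv Huv.
have BuBv : Bs e w u \subset Bs e w v.
  apply/subsetP => y; rewrite HBu inE => Hy.
  have Hs : forall a z, a \in Bs e w v -> rel_minus e (cnbh e u) a z ->
      z \in Bs e w v /\ rel_minus e (cnbh e u) a z.
    move=> a z Ha Hr; split=> //; move/and3P: Hr => [Haz _ Hzu].
    case: (boolP (z \in cnbh e v)) => Hzv; last exact: (comp_adj es cBv Ha Haz Hzv).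
    exfalso; move: Hzv; rewrite CN => /orP[/eqP Hzv | Hvz].
      by move/negP: (Bvn a Ha); apply; rewrite CN -Hzv e_sym Haz orbT.
    have zv : z != v by apply: contraTneq Hvz => ->; rewrite e_irr.
    have Hzc : z \in Cs e w v.
      rewrite HC; apply/orP; right; rewrite Hvz; apply/existsP; exists a.
      by rewrite Ha e_sym Haz.
    by move: Hzu; rewrite CN negb_or (D z Hzc zv) andbF.
  by have [_ ] := connect_transfer Hb Hs Hy.
have HBeq : Bs e w u = Bs e w v by apply/eqP; rewrite eqEsubset BuBv BvBu.
have uCu : u \in Cs e w u by rewrite HC eqxx.
have vCv : v \in Cs e w v by rewrite HC eqxx.
have HCeq : forall x, x != u -> x != v -> (x \in Cs e w u) = (x \in Cs e w v).
  move=> x xu xv; apply/idP/idP => Hx.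
    have [Hux [z Hz Hxz]] := CV u x Hx xu.
    rewrite HBeq in Hz.
    rewrite HC; apply/orP; right; apply/andP; split; last first.
      by apply/existsP; exists z; rewrite Hz.
    case: (boolP (e v x)) => // Hvx; exfalso.
    have xB : x \in Bs e w v.
      apply: (comp_adj es cBv Hz); first by rewrite e_sym.
      by rewrite CN negb_or xv Hvx.
    by move: (NB x xB); rewrite CN Hux orbT.
  have [Hvx [z Hz Hxz]] := CV v x Hx xv.
  rewrite HC (D x Hx xv) /=; apply/orP; right; apply/existsP; exists z.
  by rewrite HBeq Hz.
split.
- exact: HBeq.
- apply/setP => x; apply/setD1P/setD1P => [[xu Hx]|[xv Hx]]; split.
  + by apply: contraTneq Hx => ->.
  + have xv : x != v by apply: contraTneq Hx => ->.
    by rewrite -(HCeq x xu xv).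
  + by apply: contraTneq Hx => ->.
  + have xu : x != u by apply: contraTneq Hx => ->.
    by rewrite (HCeq x xu xv).
- apply/setP => x; apply/setD1P/setD1P => [[xv Hx]|[xu Hx]].
  + have xu : x != u by apply: contraTneq Hx => ->; rewrite (HA u u) uCu andbF.
    split; first exact: xu.
    rewrite (HA u x) in Hx; case/andP: Hx => H1 H2; rewrite (HA v x); apply/andP; split.
      rewrite -HBeq; exact: H1.
    rewrite -(HCeq x xu xv); exact: H2.
  + have xv : x != v by apply: contraTneq Hx => ->; rewrite (HA v v) vCv andbF.
    split; first exact: xv.
    rewrite (HA v x) in Hx; case/andP: Hx => H1 H2; rewrite (HA u x); apply/andP; split.
      rewrite HBeq; exact: H1.
    rewrite (HCeq x xu xv); exact: H2.
Qed.
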